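(* Let $r\ge 2$, $t\ge 1$, and let $\mathcal F\subset 2^{[n]}$ be a non-trivial $r$-wise $t$-agreeing family. For $j\in[n]$ let $\mathcal F_j=\{F\setminus\{j\}: F\in\mathcal F\}$, regarded as a subfamily of $2^{[n]\setminus\{j\}}$ (with ground set $[n]\setminus\{j\}$). If $t\ge 2$ then $\mathcal F_j$ is non-trivial $r$-wise $(t-1)$-agreeing. If $t=1$ then $\mathcal F_j$ is non-trivial $(r-1)$-wise agreeing (i.e. $(r-1)$-wise $1$-agreeing).
   Context: For a ground set $X$ and a family $\mathcal F\subset 2^X$: sets $F_1,\ldots,F_r\subset X$ agree on a coordinate $x\in X$ if either $x\in\bigcap_{i}F_i$ or $x\notin\bigcup_i F_i$. $\mathcal F$ is $r$-wise $t$-agreeing if any $r$ sets from $\mathcal F$ (not necessarily distinct) agree on at least $t$ coordinates of $X$; $r$-wise agreeing means $r$-wise $1$-agreeing. $\mathcal F$ is non-trivial if $\bigcap_{A\in\mathcal F}A=\emptyset$ and $\bigcup_{A\in\mathcal F}A=X$. Here $X=[n]$ for $\mathcal F$ and $X=[n]\setminus\{j\}$ for $\mathcal F_j$. *)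

(* Defs.v *)
From mathcomp Require Import all_boot.
Set Implicit Arguments. Unset Strict Implicit. Unset Printing Implicit Defensive.

Definition agree_on (T : finType) (r : nat) (f : 'I_r -> {set T}) (x : T) : bool :=
  [forall i, x \in f i] || [forall i, x \notin f i].

(* F is r-wise t-agreeing with ground set X: any r sets of F (not necessarily
   distinct) agree on at least t coordinates of X. *)
Definition rwise_agreeing (T : finType) (X : {set T}) (F : {set {set T}})
    (r t : nat) : Prop :=
  forall f : 'I_r -> {set T}, (forall i, f i \in F) ->
    t <= #|[set x in X | agree_on f x]|.

Definition nontrivial (T : finType) (X : {set T}) (F : {set {set T}}) : Prop :=
  X :&: (\bigcap_(A in F) A) = set0 /\ \bigcup_(A in F) A = X.

Definition deleted (n : nat) (F : {set {set 'I_n}}) (j : 'I_n) : {set {set 'I_n}} :=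
  [set A :\ j | A in F].

(* Main.v *)
Require Import Defs.
From mathcomp Require Import all_boot.
Set Implicit Arguments. Unset Strict Implicit.

Lemma agree_del (n r : nat) (j x : 'I_n) (f g : 'I_r -> {set 'I_n}) :
  x != j -> (forall i, f i = g i :\ j) -> agree_on f x = agree_on g x.
Proof.
move=> Hx Hf; rewrite /agree_on; congr (_ || _); apply: eq_forallb => i;
  by rewrite Hf in_setD1 Hx.
Qed.

Lemma pre_del (n r : nat) (F : {set {set 'I_n}}) (j : 'I_n) (f : 'I_r -> {set 'I_n}) :
  (forall i, f i \in deleted F j) ->
  exists g : 'I_r -> {set 'I_n}, forall i, g i \in F /\ f i = g i :\ j.
Proof.
move=> Hf; exists (fun i => odflt set0 [pick A in F | f i == A :\ j]) => i.
case: pickP => [A /andP [HA /eqP E] | H] //=.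
have /imsetP [A HA E] := Hf i.
by move: (H A); rewrite HA E eqxx.
Qed.

Lemma nontriv_del (n : nat) (F : {set {set 'I_n}}) (j : 'I_n) :
  nontrivial [set: 'I_n] F -> nontrivial ([set: 'I_n] :\ j) (deleted F j).
Proof.
move=> [H1 H2]; split.
  apply/setP => x; rewrite in_set0; apply/negbTE/negP.
  rewrite inE => /andP [Hx0 Hc0]; move: Hx0; rewrite !inE => /andP [Hx _]; move/bigcapP: Hc0 => Hc.
  have : x \in [set: 'I_n] :&: \bigcap_(A in F) A.
    rewrite in_setI in_setT /=; apply/bigcapP => A HA.
    have := Hc (A :\ j) (imset_f _ HA); by rewrite in_setD1 => /andP [].
  by rewrite H1 inE.
apply/setP => x; rewrite !inE; apply/bigcupP/idP.
  case=> B; rewrite /deleted => /imsetP [A HA ->]; by rewrite in_setD1 andbT => /andP [].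
rewrite andbT => Hx; have : x \in \bigcup_(A in F) A by rewrite H2.
case/bigcupP => A HA HxA; exists (A :\ j); first exact: imset_f.
by rewrite in_setD1 Hx.
Qed.

Theorem lemma2 (n r t : nat) (F : {set {set 'I_n}}) (j : 'I_n) :
  2 <= r -> 1 <= t ->
  rwise_agreeing [set: 'I_n] F r t ->
  nontrivial [set: 'I_n] F ->
  (2 <= t ->
     nontrivial ([set: 'I_n] :\ j) (deleted F j) /\
     rwise_agreeing ([set: 'I_n] :\ j) (deleted F j) r t.-1) /\
  (t = 1 ->
     nontrivial ([set: 'I_n] :\ j) (deleted F j) /\
     rwise_agreeing ([set: 'I_n] :\ j) (deleted F j) r.-1 1).
Proof.
move=> Hr Ht Hag Hnt; split=> Ht'; split; try exact: nontriv_del.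
  move=> f Hf; have [g Hg] := pre_del Hf.
  have := Hag g (fun i => (Hg i).1).
  set A := [set x in _ | agree_on g x].
  have -> : [set x in [set: 'I_n] :\ j | agree_on f x] = A :\ j.
    apply/setP => x; rewrite !inE; case: (eqVneq x j) => //= Hx.
    by rewrite (agree_del Hx (fun i => (Hg i).2)).
  rewrite (cardsD1 j A); case: (j \in A) => /=; rewrite ?add1n ?add0n.
    by move=> H; rewrite -ltnS (ltn_predK Ht').
  move=> H; apply: leq_trans H; exact: leq_pred.
case: r Hr Hag => [|m] // Hm Hag /=.
move=> f Hf; have [g Hg] := pre_del Hf.
case: Hnt => H1 H2.
have [A0 HA0 Hj0] : exists2 A, A \in F & j \notin A.
  have : j \notin [set: 'I_n] :&: \bigcap_(A in F) A by rewrite H1 inE.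
  rewrite in_setI in_setT /= => Hn.
  case: (boolP [exists A in F, j \notin A]) => [/exists_inP // | /exists_inPn Hall]; exfalso; move/negP: Hn; apply; apply/bigcapP => A HA.
  by have := Hall A HA; rewrite negbK.
have [A1 HA1 Hj1] : exists2 A, A \in F & j \in A.
  have : j \in \bigcup_(A in F) A by rewrite H2 inE.
  by case/bigcupP => A; exists A.
have m0 : 0 < m by [].
pose g0 := g (Ordinal m0).
pose e := if j \in g0 then A0 else A1.
pose h (i : 'I_m.+1) := odflt e (omap g (insub (val i))).
have HhF : forall i, h i \in F.
  move=> i; rewrite /h; case: insubP => [k _ _|_] /=; first exact: (Hg k).1.
  by rewrite /e; case: ifP.
have := Hag h HhF; rewrite Ht'; case/card_gt0P => x; rewrite inE => /andP [_ Hx].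
have Hxj : x != j.
  apply/eqP => E; subst x; move: Hx; rewrite /agree_on.
  have Hh0 : h (Ordinal (ltn_trans m0 (ltnSn m))) = g0.
    rewrite /h insubT //= => m0'; congr (g _); exact: val_inj.
  have Hhm : h ord_max = e by rewrite /h insubF //= ltnn.
  case/orP => /forallP H.
    have := H ord_max; have := H (Ordinal (ltn_trans m0 (ltnSn m))).
    by rewrite Hh0 Hhm /e => a; rewrite a (negbTE Hj0).
  have := H ord_max; have := H (Ordinal (ltn_trans m0 (ltnSn m))).
  by rewrite Hh0 Hhm /e => a; rewrite (negbTE a) Hj1.
apply/card_gt0P; exists x; rewrite !inE Hxj /=.
have Hw : forall k : 'I_m, h (widen_ord (leqnSn m) k) = g k.
  move=> k; rewrite /h insubT //= => Hk; congr (g _); exact: val_inj.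
move: Hx; rewrite (agree_del Hxj (fun i => (Hg i).2)) /agree_on.
case/orP => /forallP H; apply/orP; [left|right]; apply/forallP => k;
  by have := H (widen_ord (leqnSn m) k); rewrite Hw.
Qed.
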